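(* Let $d\ge2$ and $k>p\ge1$ be integers. If $T$ is chosen uniformly at random from $\mathcal{C}_k^{(d)}$, then the probability that each of the generations $1,2,\dots,p$ of $T$ contains at most one internal vertex is at least $e^{-p}$.
   Context: A $d$-Catalan tree is a rooted planar tree in which each vertex has $0$ or $d$ children (those with $d$ children are internal); $\mathcal{C}_k^{(d)}$ is the set of such trees with $k$ internal vertices. Generation $j$ is the set of vertices at graph distance $j$ from the root. *)

(* Defs.v *)
From Stdlib Require Import Reals.
From Stdlib Require List.
From mathcomp Require Import ssreflect ssrfun ssrbool eqtype ssrnat seq.

(* Rooted planar (ordered) trees: a vertex with an ordered list of children.
   A leaf is [PNode [::]]. *)
Inductive ptree : Type := PNode of seq ptree.

Definition children (t : ptree) : seq ptree := let: PNode cs := t in cs.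

Definition is_internal (t : ptree) : bool := size (children t) != 0.

Fixpoint is_dcat (d : nat) (t : ptree) : bool :=
  let: PNode cs := t in
  ((size cs == 0) || (size cs == d)) && all (is_dcat d) cs.

Fixpoint n_internal (t : ptree) : nat :=
  let: PNode cs := t in (size cs != 0) + sumn (map n_internal cs).

Fixpoint gen_internal (j : nat) (t : ptree) : nat :=
  let: PNode cs := t in
  match j with
  | 0 => (size cs != 0) : nat
  | j'.+1 => sumn (map (gen_internal j') cs)
  end.

Definition in_Ckd (d k : nat) (t : ptree) : bool := is_dcat d t && (n_internal t == k).

Definition thin_up_to (p : nat) (t : ptree) : bool :=
  all (fun j => gen_internal j t <= 1) (iota 1 p).

(* Main.v *)
Require Import Defs.
From Stdlib Require Import Reals.
From Stdlib Require List.
From mathcomp Require Import ssreflect ssrfun ssrbool eqtype ssrnat seq.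
From Stdlib Require Import Lra Permutation.
From mathcomp Require Import binomial zify ring.

Definition leaf := PNode [::].

Fixpoint F (d n : nat) {struct n} : nat -> seq (seq ptree) :=
  fix G a := match a with
  | 0 => if n is 0 then [:: [::]] else [::]
  | a'.+1 => List.map (cons leaf) (G a') ++
      (if n is n'.+1 then List.map (fun g => PNode (take d g) :: drop d g) (F d n' (a' + d)) else [::])
  end.

Lemma n_int_eq cs : n_internal (PNode cs) = (size cs != 0) + sumn (map n_internal cs).
Proof. by []. Qed.
Lemma dcat_eq d cs : is_dcat d (PNode cs) = ((size cs == 0) || (size cs == d)) && all (is_dcat d) cs.
Proof. by []. Qed.

Lemma F_spec d n a f : 0 < d ->
  List.In f (F d n a) <-> (size f = a /\ all (is_dcat d) f /\ sumn (map n_internal f) = n).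
Proof.
move=> d0; elim: n a f => [|n IHn] a.
- elim: a => [|a IHa] f /=.
  + split; first by case=> // <-.
    by case: f => [|x f] [sf [_ nf]] //; left.
  + rewrite cats0; split.
    * case/List.in_map_iff => g [<- /IHa [sg [ag ng]]].
      by rewrite /= sg ag ng.
    * case: f => [|[cs] f] /= [] // [sf] [/andP [dc af]] nf.
      case: cs dc nf => [|c cs] dc nf; last by move: nf; rewrite /=; lia.
      apply/List.in_map_iff; exists f; split => //; apply/IHa; do !split => //; lia.
- elim: a => [|a IHa] f /=.
  + split => //; by case => /size0nil -> [_].
  + rewrite -/cat List.in_app_iff; split.
    * case.
      -- case/List.in_map_iff => g [<- /IHa [sg [ag ng]]].
         by rewrite /= sg ag ng.
      -- case/List.in_map_iff => g [<- /IHn [sg [ag ng]]].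
         have sd : size (take d g) = d by rewrite size_take sg; case: ltnP => //; lia.
         move: ng; rewrite -{1}(cat_take_drop d g) map_cat sumn_cat => ng.
         move: ag; rewrite -{1}(cat_take_drop d g) all_cat => /andP [a1 a2].
         have dn : (d != 0) = true by rewrite -lt0n.
         split; first by rewrite /= size_drop sg; lia.
         split; first by change (is_dcat d (PNode (take d g)) && all (is_dcat d) (drop d g)); rewrite a2 andbT dcat_eq sd eqxx orbT a1.
         change (n_internal (PNode (take d g)) + sumn (map n_internal (drop d g)) = n.+1).
         rewrite n_int_eq sd dn; lia.
    * case: f => [|[cs] f] /= [] // [sf] [/andP [dc af]] nf.
      move: dc => /andP [/orP [/eqP/size0nil ec | /eqP sc] ac].
      -- subst cs; move: nf => /= nf; left; apply/List.in_map_iff; exists f; split => //; apply/IHa; do !split => //.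
      -- right; apply/List.in_map_iff; exists (cs ++ f); split.
         ++ by rewrite take_size_cat // drop_size_cat.
         ++ apply/IHn; rewrite size_cat all_cat ac af map_cat sumn_cat sc.
            move: nf; rewrite sc; have -> : (d != 0) = true by rewrite -lt0n.
            do !split => //; lia.
Qed.

Lemma NoDup_map_in (A B : Type) (f : A -> B) (l : seq A) :
  (forall x y, List.In x l -> List.In y l -> f x = f y -> x = y) ->
  List.NoDup l -> List.NoDup (List.map f l).
Proof.
move=> inj nd; elim: nd inj => [|x l0 nx nd IH] inj /=; first by constructor.
constructor.
- case/List.in_map_iff => y [fy iy].
  have := inj y x; rewrite fy => /(_ (or_intror iy) (or_introl erefl) erefl) E.
  by subst y.
- apply: IH => u v iu iv; apply: inj; by right.
Qed.

Lemma size_Lmap (A B : Type) (f : A -> B) (l : seq A) : size (List.map f l) = size l.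
Proof. by elim: l => //= x l ->. Qed.

Lemma F_NoDup d n a : 0 < d -> List.NoDup (F d n a).
Proof.
move=> d0; elim: n a => [|n IHn] a.
- elim: a => [|a IHa] /=; first by constructor => //; constructor.
  rewrite cats0; by apply: NoDup_map_in => // x y _ _ [->].
- elim: a => [|a IHa] /=; first by constructor.
  apply: List.NoDup_app.
  + by apply: NoDup_map_in => // x y _ _ [->].
  + apply: NoDup_map_in; last exact: IHn.
    move=> x y /(F_spec _ _ _ _ d0) [sx _] /(F_spec _ _ _ _ d0) [sy _] [e1 e2].
    by rewrite -(cat_take_drop d x) -(cat_take_drop d y) e1 e2.
  + move=> z /List.in_map_iff [x [<- _]] /List.in_map_iff [y [[e _] /(F_spec _ _ _ _ d0) [sy _]]].
    have : size (take d y) = 0 by rewrite e.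
    rewrite size_take sy; case: ltnP => _; lia.
Qed.

Definition r d n a := size (F d n a).

Lemma r0 d a : r d 0 a = 1.
Proof. by elim: a => // a; rewrite /r /= cats0 size_Lmap. Qed.

Lemma r_0n d n : r d n.+1 0 = 0.
Proof. by []. Qed.

Lemma rS d n a : r d n.+1 a.+1 = r d n.+1 a + r d n (a + d).
Proof. by rewrite /r /= size_cat !size_Lmap. Qed.

Lemma r_formula d n a : 0 < d -> r d n a * (d * n + a) = a * 'C(d * n + a, n).
Proof.
move=> d0; elim: n a => [|n IHn] a.
- by rewrite r0 muln0 add0n bin0 mul1n muln1.
- elim: a => [|a IHa]; first by rewrite r_0n.
  rewrite rS.
  set X := r d n.+1 a; set Y := r d n (a + d).
  set N := d * n.+1 + a.
  have eN : d * n + (a + d) = N by rewrite /N mulnS; lia.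
  move: (IHn (a + d)); rewrite eN -/Y => HY.
  rewrite -/N -/X in IHa.
  have -> : d * n.+1 + a.+1 = N.+1 by rewrite /N; lia.
  rewrite binS.
  have HB := mul_bin_left N n.
  set B1 := 'C(N, n.+1) in IHa HB *; set B := 'C(N, n) in HY HB *.
  have Nn : n <= N by rewrite /N mulnS; nia.
  have Npos : 0 < N * n.+1 by rewrite /N mulnS; nia.
  apply/eqP; rewrite -(eqn_pmul2l Npos); apply/eqP.
  have -> : N * n.+1 * ((X + Y) * N.+1) = n.+1 * N.+1 * (X * N + Y * N) by ring.
  rewrite IHa HY.
  have -> : n.+1 * N.+1 * (a * B1 + (a + d) * B) = N.+1 * (a * (n.+1 * B1) + (a + d) * n.+1 * B) by ring.
  have -> : N * n.+1 * (a.+1 * (B1 + B)) = N * a.+1 * (n.+1 * B1 + n.+1 * B) by ring.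
  rewrite HB.
  have -> : N - n = d * n + d + a - n by rewrite /N mulnS; lia.
  have : N = d * n + d + a by rewrite /N mulnS; lia.
  move=> ->.
  have [M eM] : exists M, d = M.+1 by exists d.-1; lia.
  subst d.
  have -> : M.+1 * n + M.+1 + a - n = M * n + M.+1 + a by nia.
  ring.
Qed.

Lemma c_fact q n : r q.+1 n 1 * (n`! * (q * n).+1`!) = (q.+1 * n)`!.
Proof.
have H := r_formula q.+1 n 1 (ltn0Sn q).
rewrite mul1n in H.
have Hle : n <= q.+1 * n + 1 by nia.
have := bin_fact Hle.
have -> : q.+1 * n + 1 - n = (q * n).+1 by rewrite mulSn; lia.
rewrite -H addn1 factS => E.
apply/eqP; rewrite -(eqn_pmul2l (ltn0Sn (q.+1 * n))); apply/eqP.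
by rewrite -(factS (q.+1 * n)) -E; ring.
Qed.

Lemma fact_ineq q m j :
  (q.+1 * m + j)`! * (q * m).+1`! * q ^ j <= q.+1 ^ j * (q.+1 * m)`! * ((q * m).+1 + j)`!.
Proof.
elim: j => [|j IH]; first by rewrite !addn0 !expn0 muln1 mul1n mulnC.
rewrite !addnS (factS (q.+1 * m + j)) (factS ((q * m).+1 + j)) !expnS.
have F : (q.+1 * m + j).+1 * q <= q.+1 * ((q * m).+1 + j).+1 by nia.
have := leq_mul F IH.
move=> H; apply: leq_trans _ (leq_trans H _).
- by apply: eq_leq; ring.
- by apply: eq_leq; ring.
Qed.

Lemma c_ratio q m : r q.+1 m.+1 1 * q ^ q <= q.+1 ^ q.+1 * r q.+1 m 1.
Proof.
have H := fact_ineq q m q.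
have c1 := c_fact q m.+1; have c0 := c_fact q m.
have e1 : q.+1 * m.+1 = (q.+1 * m + q).+1 by rewrite mulnS; lia.
have e2 : q * m.+1 = (q * m) + q by rewrite mulnS; lia.
rewrite e1 factS e2 in c1.
have P : 0 < m.+1`! * ((q * m + q).+1`! * (q * m).+1`!).
  by rewrite !muln_gt0 !fact_gt0.
rewrite -(leq_pmul2r P).
have -> : r q.+1 m.+1 1 * q ^ q * (m.+1`! * ((q * m + q).+1`! * (q * m).+1`!))
   = (r q.+1 m.+1 1 * (m.+1`! * (q * m + q).+1`!)) * (q * m).+1`! * q ^ q by ring.
rewrite c1.
have -> : q.+1 ^ q.+1 * r q.+1 m 1 * (m.+1`! * ((q * m + q).+1`! * (q * m).+1`!))
   = q.+1 * m.+1 * (q.+1 ^ q * (r q.+1 m 1 * (m`! * (q * m).+1`!)) * (q * m + q).+1`!).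
  by rewrite factS expnS; ring.
rewrite c0.
have -> : (q.+1 * m + q).+1 * (q.+1 * m + q)`! * (q * m).+1`! * q ^ q =
   (q.+1 * m + q).+1 * ((q.+1 * m + q)`! * (q * m).+1`! * q ^ q) by ring.
have -> : (q.+1 * m + q).+1 = q.+1 * m.+1 by rewrite mulnS; lia.
rewrite leq_mul2l; apply/orP; right.
move: H; by rewrite addSn.
Qed.

Definition E d n := List.map (head leaf) (F d n 1).

Lemma E_spec d n t : 0 < d -> List.In t (E d n) <-> (is_dcat d t /\ n_internal t = n).
Proof.
move=> d0; split.
- case/List.in_map_iff => x [<- /(F_spec _ _ _ _ d0) [sx [ax nx]]].
  case: x sx ax nx => [|y [|z x]] //= _; rewrite andbT addn0 => ??; by [].
- case=> dt nt; apply/List.in_map_iff; exists [:: t]; split => //.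
  by apply/(F_spec _ _ _ _ d0) => /=; rewrite dt addn0.
Qed.

Lemma E_NoDup d n : 0 < d -> List.NoDup (E d n).
Proof.
move=> d0; apply: NoDup_map_in; last exact: F_NoDup.
move=> x y /(F_spec _ _ _ _ d0) [sx _] /(F_spec _ _ _ _ d0) [sy _].
by case: x sx => [|x [|]] //; case: y sy => [|y [|]] //= _ _ ->.
Qed.

Lemma size_E d n : size (E d n) = r d n 1.
Proof. by rewrite /E size_Lmap. Qed.

Definition mk d i c := PNode (nseq i leaf ++ c :: nseq (d.-1 - i) leaf).

Fixpoint Th d j m : seq ptree :=
  match j with
  | 0 => E d m
  | j'.+1 => List.flat_map (fun i => List.map (mk d i) (Th d j' m.-1)) (iota 0 d)
  end.

Lemma gen_leaf i : gen_internal i leaf = 0.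
Proof. by case: i. Qed.

Lemma sumn_map_nseq (f : ptree -> nat) k x : f x = 0 -> sumn (map f (nseq k x)) = 0.
Proof. by move=> fx; elim: k => //= k ->; rewrite fx. Qed.

Lemma gen_mk d i c j : gen_internal j.+1 (mk d i c) = gen_internal j c.
Proof.
rewrite /mk /= map_cat sumn_cat /= !sumn_map_nseq ?gen_leaf //; lia.
Qed.

Lemma nint_mk d i c : n_internal (mk d i c) = (n_internal c).+1.
Proof.
rewrite /mk n_int_eq size_cat /= addnS map_cat sumn_cat /= !sumn_map_nseq //; lia.
Qed.

Lemma dcat_mk d i c : i < d -> is_dcat d (mk d i c) = is_dcat d c.
Proof.
move=> id; rewrite /mk dcat_eq size_cat /= size_nseq all_cat /= !all_nseq /=.
rewrite size_nseq.
have -> : i + (d.-1 - i).+1 = d by lia.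
by rewrite eqxx orbT /= !orbT andbT.
Qed.

Lemma thinS j t : thin_up_to j.+1 t = (gen_internal 1 t <= 1) &&
   all (fun i => gen_internal i.+1 t <= 1) (iota 1 j).
Proof.
rewrite /thin_up_to /=; congr (_ && _).
by rewrite -(addn1 1) iotaDl all_map; by [].
Qed.

Lemma thin_mk d i c j : thin_up_to j.+1 (mk d i c) = (gen_internal 0 c <= 1) && thin_up_to j c.
Proof.
rewrite thinS gen_mk; congr (_ && _).
by apply: eq_all => x; rewrite gen_mk.
Qed.

Lemma nint_pos_internal t : 0 < n_internal t -> is_internal t.
Proof. by case: t => [[|c cs]]. Qed.

Lemma gen0_le1 t : gen_internal 0 t <= 1.
Proof. by case: t => cs /=; case: (size cs != 0). Qed.

Lemma app_cat (A : Type) (l1 l2 : seq A) : List.app l1 l2 = l1 ++ l2.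
Proof. by elim: l1 => //= x l ->. Qed.

Lemma In_iota i a n : List.In i (iota a n) <-> a <= i < a + n.
Proof.
elim: n a => [|n IH] a /=; first by split => //; lia.
rewrite IH; split; first by case; lia.
case: (eqVneq a i) => [->|ne]; first by left.
by move=> H; right; lia.
Qed.

Lemma NoDup_flat_map (A B : Type) (f : A -> seq B) (l : seq A) :
  List.NoDup l -> (forall x, List.In x l -> List.NoDup (f x)) ->
  (forall x y z, List.In x l -> List.In y l -> List.In z (f x) -> List.In z (f y) -> x = y) ->
  List.NoDup (List.flat_map f l).
Proof.
elim=> [|x l0 nx nd IH] Hf Hd /=; first by constructor.
apply: List.NoDup_app.
- by apply: Hf; left.
- apply: IH => [y iy|y z w iy iz]; first by apply: Hf; right.
  by apply: Hd; right.
- move=> z zx /List.in_flat_map [y [iy zy]].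
  have E : x = y by apply: (Hd x y z) => //; [left|right].
  by subst y.
Qed.

Lemma size_flat_map (A B C : Type) (g : A -> C -> B) (X : seq C) (l : seq A) :
  size (List.flat_map (fun i => List.map (g i) X) l) = size l * size X.
Proof. by elim: l => //= x l IH; rewrite app_cat size_cat size_Lmap IH mulSn. Qed.

Lemma gen0_count cs : sumn (map (gen_internal 0) cs) = count is_internal cs.
Proof. by elim: cs => //= c cs ->; case: c. Qed.

Lemma nonint_leaves L : ~~ has is_internal L -> L = nseq (size L) leaf.
Proof.
elim: L => //= [[cs] L IH]; rewrite negb_or => /andP [ni /IH {1}->].
by case: cs ni.
Qed.

Lemma find_mk d i c (ic : is_internal c) :
  find is_internal (children (mk d i c)) = i.
Proof.
rewrite /mk /= find_cat has_nseq andbF size_nseq /= ic; lia.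
Qed.

Lemma nth_mk d i c : nth leaf (children (mk d i c)) i = c.
Proof. by rewrite /mk /= nth_cat size_nseq ltnn subnn. Qed.

Lemma mk_inj d i1 i2 c1 c2 : is_internal c1 -> is_internal c2 ->
  mk d i1 c1 = mk d i2 c2 -> i1 = i2 /\ c1 = c2.
Proof.
move=> h1 h2 e.
have ei : i1 = i2 by rewrite -(find_mk d i1 c1 h1) -(find_mk d i2 c2 h2) e.
split => //; subst i2.
by rewrite -(nth_mk d i1 c1) -(nth_mk d i1 c2) e.
Qed.

Lemma decomp d t m : 0 < d -> is_dcat d t -> n_internal t = m.+2 ->
  gen_internal 1 t <= 1 ->
  exists i c, [/\ i < d, t = mk d i c & is_internal c].
Proof.
move=> d0; case: t => cs; rewrite dcat_eq n_int_eq => /andP [sz ac] nt g1.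
have sd : size cs = d.
  by case/orP: sz => /eqP // s0; move: nt; rewrite s0 (size0nil s0) /=.
have hs : has is_internal cs.
  apply/negPn/negP => /nonint_leaves ecs; move: nt; rewrite ecs size_nseq.
  by rewrite sumn_map_nseq //; lia.
set k := find is_internal cs.
have kd : k < d by rewrite -sd -has_find.
set c := nth leaf cs k.
have ic : is_internal c by apply: nth_find.
have ecs : cs = take k cs ++ c :: drop k.+1 cs by rewrite -drop_nth ?cat_take_drop // sd.
have cnt : count is_internal cs <= 1 by rewrite -gen0_count.
move: cnt; rewrite ecs count_cat /= ic.
move=> cnt.
have h1 : ~~ has is_internal (take k cs) by rewrite has_count; lia.
have h2 : ~~ has is_internal (drop k.+1 cs) by rewrite has_count; lia.
exists k, c; split => //.
have et : take k cs = nseq k leaf by rewrite {1}(nonint_leaves _ h1) size_take sd kd.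
have ed : drop k.+1 cs = nseq (d.-1 - k) leaf.
  by rewrite {1}(nonint_leaves _ h2) size_drop sd; congr nseq; lia.
by rewrite /mk -et -ed -ecs.
Qed.

Lemma Th_spec d j m t : 0 < d -> j < m ->
  List.In t (Th d j m) <-> (is_dcat d t /\ n_internal t = m /\ thin_up_to j t).
Proof.
move=> d0; elim: j m t => [|j IH] m t jm.
- rewrite /= E_spec //; split; first by case.
  by case=> ? [].
- case: m jm => [|m] // jm /=; rewrite List.in_flat_map; split.
  + case=> i [/In_iota ii /List.in_map_iff [c [<- /IH]]].
    case/(_ jm) => dc [nc tc].
    rewrite dcat_mk; last by lia.
    by rewrite nint_mk nc thin_mk gen0_le1 tc.
  + case=> dt [nt tt].
    case: m jm nt IH => [|m] // jm nt IH.
    have g1 : gen_internal 1 t <= 1 by move: tt; rewrite thinS => /andP [].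
    have [i [c [id et ic]]] := decomp d t m d0 dt nt g1.
    subst t.
    exists i; split; first by apply/In_iota; lia.
    apply/List.in_map_iff; exists c; split => //.
    apply/IH => //.
    move: dt nt tt; rewrite dcat_mk // nint_mk thin_mk => -> [->] /andP [_ ->].
    by [].
Qed.

Lemma NoDup_iota a n : List.NoDup (iota a n).
Proof.
elim: n a => [|n IH] a /=; constructor; last exact: IH.
by move/In_iota; lia.
Qed.

Lemma Th_NoDup d j m : 0 < d -> j < m -> List.NoDup (Th d j m).
Proof.
move=> d0; elim: j m => [|j IH] m jm; first exact: E_NoDup.
case: m jm => [|m] // jm /=.
have intc c : List.In c (Th d j m) -> is_internal c.
  by move=> ic; have [_ [nc _]] := (Th_spec d j m c d0 jm).1 ic; apply: nint_pos_internal; lia.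
apply: NoDup_flat_map.
- exact: NoDup_iota.
- move=> x _; apply: NoDup_map_in; last exact: IH.
  move=> u v iu iv e; by case: (mk_inj _ _ _ _ _ (intc _ iu) (intc _ iv) e).
- move=> x y z _ _ /List.in_map_iff [u [<- iu]] /List.in_map_iff [v [e iv]].
  by case: (mk_inj _ _ _ _ _ (intc _ iv) (intc _ iu) e).
Qed.

Lemma size_Th d j m : size (Th d j m) = d ^ j * r d (m - j) 1.
Proof.
elim: j m => [|j IH] m; first by rewrite /= size_E subn0 mul1n.
rewrite /= size_flat_map size_iota IH expnS mulnA.
by have -> : m.-1 - j = m - j.+1 by lia.
Qed.

Lemma size_length (A : Type) (l : seq A) : size l = List.length l.
Proof. by elim: l => //= x l ->. Qed.

Lemma same_size (A : Type) (l1 l2 : seq A) : List.NoDup l1 -> List.NoDup l2 ->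
  (forall x, List.In x l1 <-> List.In x l2) -> size l1 = size l2.
Proof.
move=> n1 n2 H; rewrite !size_length; apply: Permutation_length.
exact: NoDup_Permutation.
Qed.

Lemma In_filter (A : Type) (a : pred A) (s : seq A) x :
  List.In x (filter a s) <-> List.In x s /\ a x.
Proof.
elim: s => [|y s IH] /=; first by split => // - [].
case ay: (a y) => /=; rewrite IH; split.
- by case=> [<-|[]]; [split; [left|] | split; [right|]].
- by case=> [[<-|xs] ax]; [left|right].
- by case=> xs ax; split; [right|].
- by case=> [[yx|xs] ax]; [subst y; rewrite ay in ax|].
Qed.

Lemma NoDup_filter' (A : Type) (a : pred A) (s : seq A) :
  List.NoDup s -> List.NoDup (filter a s).
Proof.
elim=> [|y s0 ny nd IH] /=; first by constructor.
case: (a y) => //; constructor => //.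
by move/In_filter => [].
Qed.

Lemma c_iter q k p : p <= k ->
  r q.+1 k 1 * (q ^ q) ^ p <= (q.+1 ^ q.+1) ^ p * r q.+1 (k - p) 1.
Proof.
elim: p => [|p IH] pk; first by rewrite !expn0 muln1 mul1n subn0.
have H1 := IH (ltnW pk).
have e : k - p = (k - p.+1).+1 by lia.
have H2 := c_ratio q (k - p.+1).
rewrite -e in H2.
set A := r q.+1 k 1; set Q := q ^ q; set D := q.+1 ^ q.+1.
set B := r q.+1 (k - p) 1; set C := r q.+1 (k - p.+1) 1.
fold A Q D B in H1; fold B C Q D in H2.
rewrite !expnS.
apply: (leq_trans (n := D ^ p * B * Q)).
- have -> : A * (Q * Q ^ p) = A * Q ^ p * Q by ring.
  by rewrite leq_mul2r H1 orbT.
- have -> : D ^ p * B * Q = D ^ p * (B * Q) by ring.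
  have -> : D * D ^ p * C = D ^ p * (D * C) by ring.
  by rewrite leq_mul2l H2 orbT.
Qed.

From Stdlib Require Import Ring Field.

Lemma INR_muln m n : INR (m * n) = (INR m * INR n)%R.
Proof. by rewrite -multE mult_INR. Qed.

Lemma INR_expn m n : INR (m ^ n) = (INR m ^ n)%R.
Proof. elim: n => [|n IH]; first by rewrite expn0. by rewrite expnS INR_muln IH. Qed.

Lemma exp_pow_nat x n : (exp x ^ n)%R = exp (INR n * x).
Proof.
elim: n => [|n IH]; first by rewrite /= Rmult_0_l exp_0.
rewrite S_INR /= IH -exp_plus; f_equal; ring.
Qed.

Lemma e_bound q : (0 < q)%N -> (INR q.+1 ^ q <= exp 1 * INR q ^ q)%R.
Proof.
move=> q0.
have xq : (0 < INR q)%R by apply: lt_0_INR; apply/ltP.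
have -> : INR q.+1 = (INR q * (1 + / INR q))%R by rewrite S_INR; field; lra.
rewrite Rpow_mult_distr Rmult_comm.
apply: Rmult_le_compat_r; first by apply: pow_le; lra.
have H : (1 + / INR q <= exp (/ INR q))%R by apply: exp_ineq1_le.
apply: Rle_trans (pow_incr _ _ q _) _.
- split; last exact: H.
  have : (0 < / INR q)%R by apply: Rinv_0_lt_compat.
  lra.
- rewrite exp_pow_nat; right; f_equal; field; lra.
Qed.

Theorem corollary5p3 (d k p : nat) (s : seq ptree) :
  2 <= d -> 1 <= p -> p < k ->
  List.NoDup s ->
  (forall t : ptree, List.In t s <-> in_Ckd d k t) ->
  (Rle (exp (Ropp (INR p)))
       (Rdiv (INR (count (thin_up_to p) s)) (INR (size s)))).
Proof.
move=> d2 p1 pk nds hs.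
have d0 : 0 < d by apply: ltn_trans d2.
have hsz : size s = r d k 1.
  rewrite -size_E; apply: same_size => //; first exact: E_NoDup.
  move=> t; rewrite hs E_spec // /in_Ckd; split; first by move/andP => [a /eqP b].
  by case=> -> ->; rewrite eqxx.
have hct : count (thin_up_to p) s = d ^ p * r d (k - p) 1.
  rewrite -size_filter -size_Th; apply: same_size.
  - exact: NoDup_filter'.
  - exact: Th_NoDup.
  - move=> t; rewrite In_filter hs Th_spec // /in_Ckd; split.
    + by case=> /andP [-> /eqP ->] ->.
    + by case=> -> [-> ->]; rewrite eqxx.
rewrite hsz hct.
case: d d2 d0 hs hsz hct => [|q] // d2 _ hs hsz hct.
have q0 : (0 < q)%N by [].
have Hn := c_iter q k p (ltnW pk).
have Bpos : (0 < r q.+1 k 1)%N.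
  have := r_formula q.+1 k 1 (ltn0Sn q).
  rewrite mul1n => E.
  have : (0 < 'C(q.+1 * k + 1, k))%N by rewrite bin_gt0; apply: leq_trans (leq_addr _ _); apply: leq_pmull.
  by rewrite -E muln_gt0 => /andP [].
move: Hn => /leP /le_INR.
rewrite !INR_muln !INR_expn.
set B := INR (r q.+1 k 1); set C := INR (r q.+1 (k - p) 1).
set x := INR q; set y := INR q.+1.
move=> HR.
have xpos : (0 < x)%R by apply: lt_0_INR; apply/ltP.
have ypos : (0 < y)%R by apply: lt_0_INR; apply/ltP.
have Bp : (0 < B)%R by apply: lt_0_INR; apply/ltP.
have Cp : (0 <= C)%R by apply: pos_INR.
have eb := e_bound q q0; fold x y in eb.
have xqp : (0 < (x ^ q) ^ p)%R by apply: pow_lt; apply: pow_lt.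
have yq0 : (0 <= y ^ q)%R by apply: pow_le; lra.
have H1 : ((y ^ q) ^ p <= (exp 1 * x ^ q) ^ p)%R by apply: pow_incr; lra.
have H2 : (B * (x ^ q) ^ p <= y ^ p * exp (INR p) * ((x ^ q) ^ p * C))%R.
  apply: Rle_trans HR _.
  rewrite (_ : y ^ q.+1 = y * y ^ q)%R // Rpow_mult_distr.
  have ee : exp (INR p) = (exp 1 ^ p)%R by rewrite exp_pow_nat Rmult_1_r.
  rewrite ee.
  have -> : (y ^ p * exp 1 ^ p * ((x ^ q) ^ p * C) = y ^ p * ((exp 1 * x ^ q) ^ p) * C)%R.
    by rewrite Rpow_mult_distr; ring.
  apply: Rmult_le_compat_r => //.
  apply: Rmult_le_compat_l; first by apply: pow_le; lra.
  exact: H1.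
have H3 : (B <= y ^ p * exp (INR p) * C)%R.
  apply: (Rmult_le_reg_r ((x ^ q) ^ p)) => //.
  move: H2; rewrite (Rmult_comm ((x ^ q) ^ p) C); lra.
have ep : (exp (- INR p) * exp (INR p) = 1)%R by rewrite -exp_plus Rplus_opp_l exp_0.
have epos : (0 < exp (- INR p))%R by apply: exp_pos.
rewrite /Rdiv.
apply: (Rmult_le_reg_r B) => //.
rewrite Rmult_assoc Rinv_l; last by lra.
rewrite Rmult_1_r.
have : (exp (- INR p) * B <= exp (- INR p) * (y ^ p * exp (INR p) * C))%R.
  by apply: Rmult_le_compat_l; lra.
have -> : (exp (- INR p) * (y ^ p * exp (INR p) * C) = (exp (- INR p) * exp (INR p)) * (y ^ p * C))%R by ring.
by rewrite ep Rmult_1_l.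
Qed.
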